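(* A strict first-order theory $T$ is positively model-complete if and only if it is geometrically complete.
   Context: The trivial structure $\mathbf 1$ is the one-element structure with all relations full; $T$ is strict if $\mathbf 1$ embeds in no model of $T$. A homomorphism preserves atomic sentences with parameters; it is an immersion if it reflects every positive existential (prenex existential, negation-free) sentence with parameters; $T$ is positively model-complete if every homomorphism between models of $T$ is an immersion. A homomorphism $f:A\to B$ is geometrically closed if every sentence $\forall\bar y\,(\bigwedge\Phi(\bar a,\bar y)\to\psi(\bar a,\bar y))$ ($\Phi\cup\{\psi\}$ finite sets of atomic formulas, parameters from $A$) true in $A$ holds in $B$ of $f\bar a$; $T$ is geometrically complete if every homomorphism between models of $T$ is geometrically closed. *)

(* Defs.v *)
From mathcomp Require Import all_boot.

Set Implicit Arguments.
Unset Strict Implicit.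
Unset Printing Implicit Defensive.

Record signature := Signature {
  fsym : Type;  farity : fsym -> nat;
  rsym : Type;  rarity : rsym -> nat }.

Section Syntax.
Variable L : signature.

Inductive term : Type :=
| TVar : nat -> term
| TApp : forall f : fsym L, ('I_(farity f) -> term) -> term.

Inductive form : Type :=
| FTrue : form
| FFalse : form
| FEq : term -> term -> form
| FRel : forall r : rsym L, ('I_(rarity r) -> term) -> form
| FNot : form -> form
| FAnd : form -> form -> form
| FOr : form -> form -> form
| FImp : form -> form -> form
| FAll : nat -> form -> form
| FEx : nat -> form -> form.

Definition atomic (phi : form) : Prop :=
  match phi with FEq _ _ | FRel _ _ => True | _ => False end.

Inductive qf_positive : form -> Prop :=
| qfp_atom phi : atomic phi -> qf_positive phi
| qfp_true : qf_positive FTrue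
| qfp_false : qf_positive FFalse
| qfp_and phi psi : qf_positive phi -> qf_positive psi -> qf_positive (FAnd phi psi)
| qfp_or phi psi : qf_positive phi -> qf_positive psi -> qf_positive (FOr phi psi).

Inductive pos_exist : form -> Prop :=
| pe_qf phi : qf_positive phi -> pos_exist phi
| pe_ex x phi : pos_exist phi -> pos_exist (FEx x phi).

Fixpoint in_list (phi : form) (Phi : seq form) : Prop :=
  match Phi with [::] => False | p :: Ps => p = phi \/ in_list phi Ps end.

Definition big_and (Phi : seq form) : form := foldr FAnd FTrue Phi.

Definition geom_form (ys : seq nat) (Phi : seq form) (psi : form) : form :=
  foldr FAll (FImp (big_and Phi) psi) ys.

End Syntax.

Arguments FTrue {L}.
Arguments FFalse {L}.

Record structure (L : signature) := Structure {
  carrier :> Type;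
  finterp : forall f : fsym L, ('I_(farity f) -> carrier) -> carrier;
  rinterp : forall r : rsym L, ('I_(rarity r) -> carrier) -> Prop }.

Section Semantics.
Variables (L : signature) (M : structure L).

Fixpoint eval (e : nat -> M) (t : term L) : M :=
  match t with
  | TVar n => e n
  | TApp f ts => @finterp L M f (fun i => eval e (ts i))
  end.

Definition upd (e : nat -> M) (x : nat) (a : M) : nat -> M :=
  fun n => if n == x then a else e n.

Fixpoint sat (e : nat -> M) (phi : form L) : Prop :=
  match phi with
  | FTrue => True
  | FFalse => False
  | FEq t u => eval e t = eval e u
  | FRel r ts => @rinterp L M r (fun i => eval e (ts i))
  | FNot p => ~ sat e p
  | FAnd p q => sat e p /\ sat e q
  | FOr p q => sat e p \/ sat e q
  | FImp p q => sat e p -> sat e q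
  | FAll x p => forall a : M, sat (upd e x a) p
  | FEx x p => exists a : M, sat (upd e x a) p
  end.

End Semantics.

Arguments eval {L} M e t.
Arguments sat {L} M e phi.

Definition theory (L : signature) := form L -> Prop.

Definition is_model (L : signature) (T : theory L) (M : structure L) : Prop :=
  inhabited M /\ forall phi, T phi -> forall e : nat -> M, sat M e phi.

Definition trivial_structure (L : signature) : structure L :=
  @Structure L unit (fun _ _ => tt) (fun _ _ => True).

Section Maps.
Variables (L : signature) (A B : structure L).

Definition homomorphism (h : A -> B) : Prop :=
  forall phi : form L, atomic phi ->
  forall e : nat -> A, sat A e phi -> sat B (h \o e) phi.

Definition embedding (h : A -> B) : Prop :=
  injective h /\
  forall phi : form L, atomic phi ->
  forall e : nat -> A, sat A e phi <-> sat B (h \o e) phi.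

Definition immersion (h : A -> B) : Prop :=
  homomorphism h /\
  forall phi : form L, pos_exist phi ->
  forall e : nat -> A, sat B (h \o e) phi -> sat A e phi.

Definition geom_closed (h : A -> B) : Prop :=
  homomorphism h /\
  forall (ys : seq nat) (Phi : seq (form L)) (psi : form L),
    (forall phi, in_list phi Phi -> atomic phi) -> atomic psi ->
    forall e : nat -> A,
      sat A e (geom_form ys Phi psi) -> sat B (h \o e) (geom_form ys Phi psi).

End Maps.

Definition strict (L : signature) (T : theory L) : Prop :=
  forall M : structure L, is_model T M ->
  forall h : trivial_structure L -> M, ~ embedding h.

Definition pos_model_complete (L : signature) (T : theory L) : Prop :=
  forall (A B : structure L), is_model T A -> is_model T B ->
  forall h : A -> B, homomorphism h -> immersion h.

Definition geom_complete (L : signature) (T : theory L) : Prop :=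
  forall (A B : structure L), is_model T A -> is_model T B ->
  forall h : A -> B, homomorphism h -> geom_closed h.

(* Main.v *)
Require Import Defs.
From mathcomp Require Import all_boot.
From Stdlib Require Import Classical ClassicalEpsilon FunctionalExtensionality PropExtensionality ProofIrrelevance Lia.
From Stdlib Require List.
From mathcomp Require Import zify.
From mathcomp Require classical_sets filter.

Set Implicit Arguments.
Unset Strict Implicit.
Unset Printing Implicit Defensive.


Section Util.
Variable L : signature.

Fixpoint tmax (t : term L) : nat :=
  match t with
  | TVar n => n
  | TApp f ts => foldr maxn 0 (List.map (fun i => tmax (ts i)) (enum 'I_(farity f)))
  end.

Definition amax (phi : form L) : nat :=
  match phi with
  | FEq t u => maxn (tmax t) (tmax u)
  | FRel r ts => foldr maxn 0 (List.map (fun i => tmax (ts i)) (enum 'I_(rarity r)))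
  | _ => 0
  end.

Definition lmax (Phi : seq (form L)) : nat := foldr maxn 0 (List.map amax Phi).

Lemma In_enum n (j : 'I_n) : List.In j (enum 'I_n).
Proof.
have : j \in enum 'I_n by rewrite mem_enum.
elim: (enum 'I_n) => //= a s IH; rewrite in_cons => /orP [/eqP ->|/IH]; auto.
Qed.

Lemma foldr_max_In (x : nat) s : List.In x s -> x <= foldr maxn 0 s.
Proof.
elim: s => //= a s IH [->|/IH H]; first exact: leq_maxl.
exact: (leq_trans H (leq_maxr _ _)).
Qed.

Lemma in_list_In (phi : form L) l : in_list phi l <-> List.In phi l.
Proof. by elim: l => //= a l IH; rewrite IH. Qed.

Lemma tmax_sub f (ts : 'I_(farity f) -> term L) j : tmax (ts j) <= tmax (@TApp L f ts).
Proof. apply: foldr_max_In; apply: List.in_map; exact: In_enum. Qed.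

Lemma eval_ext (M : structure L) (g1 g2 : nat -> M) t :
  (forall n, n <= tmax t -> g1 n = g2 n) -> eval M g1 t = eval M g2 t.
Proof.
elim: t => [n|f ts IH] H /=; first exact: H.
f_equal; apply: functional_extensionality => j; apply: IH => n Hn.
apply: H; exact: (leq_trans Hn (tmax_sub ts j)).
Qed.

Lemma sat_ext_atomic (M : structure L) (g1 g2 : nat -> M) phi :
  atomic phi -> (forall n, n <= amax phi -> g1 n = g2 n) ->
  (sat M g1 phi <-> sat M g2 phi).
Proof.
case: phi => //= [t u|r ts] _ H.
- rewrite (eval_ext (g1:=g1) (g2:=g2)); last first.
    by move=> n Hn; apply: H; exact: (leq_trans Hn (leq_maxl _ _)).
  rewrite (eval_ext (t:=u) (g1:=g1) (g2:=g2)) //.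
  by move=> n Hn; apply: H; exact: (leq_trans Hn (leq_maxr _ _)).
- have -> : (fun i => eval M g1 (ts i)) = (fun i => eval M g2 (ts i)) => //.
  apply: functional_extensionality => j; apply: eval_ext => n Hn; apply: H.
  apply: (leq_trans Hn); apply: foldr_max_In; apply: List.in_map; exact: In_enum.
Qed.

Lemma amax_lmax phi Phi : List.In phi Phi -> amax phi <= lmax Phi.
Proof. by move=> H; apply: foldr_max_In; apply: List.in_map. Qed.

Lemma sat_big_and (M : structure L) g Phi :
  sat M g (big_and Phi) <-> forall phi, List.In phi Phi -> sat M g phi.
Proof.
elim: Phi => [|a l IH] /=; first by split.
split.
- by move=> [Ha /IH Hl] phi [<-|/Hl].
- move=> H; split; first by apply: H; left.
  by apply/IH => phi Hp; apply: H; right.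
Qed.

Definition agree_out (M : Type) (xs : seq nat) (g g' : nat -> M) :=
  forall n, ~ List.In n xs -> g' n = g n.

Lemma upd_agree (M : structure L) xs x (g g' : nat -> M) :
  (exists a, agree_out xs (upd g x a) g') <-> agree_out (x :: xs) g g'.
Proof.
split.
- move=> [a H] n /= Hn; rewrite H; last by tauto.
  rewrite /upd; case: eqP => // E; exfalso; apply: Hn; left; by [].
- move=> H; exists (g' x) => n Hn; rewrite /upd; case: eqP => [->//|E].
  apply: H => /= [[E'|//]]; by apply: E.
Qed.

Lemma agree_nil (M : Type) (g g' : nat -> M) : agree_out [::] g g' -> g' = g.
Proof. by move=> H; apply: functional_extensionality => n; apply: H. Qed.

Lemma sat_allN (M : structure L) ys p (g : nat -> M) :
  sat M g (foldr (@FAll L) p ys) <-> forall g', agree_out ys g g' -> sat M g' p.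
Proof.
elim: ys g => [|y ys IH] g /=.
- split; [by move=> H g' /agree_nil ->|]; move=> H; apply: H => n //.
- split.
  + move=> H g' /upd_agree [a Ha]; exact: (proj1 (IH _) (H a) _ Ha).
  + move=> H a; apply/IH => g' Ha; apply: H; apply/upd_agree; by exists a.
Qed.

Lemma sat_exN (M : structure L) xs p (g : nat -> M) :
  sat M g (foldr (@FEx L) p xs) <-> exists g', agree_out xs g g' /\ sat M g' p.
Proof.
elim: xs g => [|y ys IH] g /=.
- split; [by move=> H; exists g|]; by move=> [g' [/agree_nil -> H]].
- split.
  + move=> [a /IH [g' [H1 H2]]]; exists g'; split => //; apply/upd_agree; by exists a.
  + move=> [g' [/upd_agree [a Ha] H]]; exists a; apply/IH; by exists g'.
Qed.

Lemma pos_exist_dec phi : pos_exist phi ->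
  exists xs p, qf_positive p /\ phi = foldr (@FEx L) p xs.
Proof.
elim=> [p Hp|x p _ [xs [q [Hq ->]]]]; first by exists [::], p.
by exists (x :: xs), q.
Qed.

Lemma qfp_big_and (Phi : seq (form L)) : (forall phi, List.In phi Phi -> atomic phi) -> qf_positive (big_and Phi).
Proof.
elim: Phi => [|a l IH] H /=; first exact: qfp_true.
apply: qfp_and; first by apply: qfp_atom; apply: H; left.
by apply: IH => phi Hp; apply: H; right.
Qed.

Lemma pe_exN xs (p : form L) : qf_positive p -> pos_exist (foldr (@FEx L) p xs).
Proof. move=> Hp; elim: xs => [|x xs IH] /=; [exact: pe_qf | exact: pe_ex]. Qed.

Lemma dnf (M : structure L) g p : qf_positive p -> sat M g p ->
  exists Phi, (forall q, List.In q Phi -> atomic q) /\ sat M g (big_and Phi) /\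
    forall (M' : structure L) g', sat M' g' (big_and Phi) -> sat M' g' p.
Proof.
elim=> [phi Ha|||phi psi _ IH1 _ IH2|phi psi _ IH1 _ IH2] /=.
- move=> H; exists [:: phi]; split; first by move=> q [<-|].
  by split; [split|move=> M' g' []].
- move=> _; exists [::]; by split.
- by [].
- move=> [/IH1 [P1 [A1 [S1 I1]]] /IH2 [P2 [A2 [S2 I2]]]].
  exists (P1 ++ P2); split; first by move=> q /List.in_app_iff [/A1|/A2].
  split.
  + apply/sat_big_and => q /List.in_app_iff [Hq|Hq];
      [move: S1 => /sat_big_and S1; exact: S1 | move: S2 => /sat_big_and S2; exact: S2].
  + move=> M' g' /sat_big_and H; split; [apply: I1|apply: I2]; apply/sat_big_and => q Hq;
    apply: H; apply/List.in_app_iff; tauto.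
- move=> [/IH1 [P1 [A1 [S1 I1]]]|/IH2 [P2 [A2 [S2 I2]]]].
  + exists P1; split => //; split => // M' g' /I1; by left.
  + exists P2; split => //; split => // M' g' /I2; by right.
Qed.

End Util.

Section Ultra.
Variables (L : signature) (A : structure L) (a0 : A) (I : Type)
  (U : (I -> Prop) -> Prop).
Hypothesis US : forall X Y : I -> Prop, (forall i, X i -> Y i) -> U X -> U Y.
Hypothesis UI : forall X Y : I -> Prop, U X -> U Y -> U (fun i => X i /\ Y i).
Hypothesis U0 : ~ U (fun _ => False).
Hypothesis UC : forall X : I -> Prop, U X \/ U (fun i => ~ X i).
Hypothesis UT : U (fun _ => True).

Lemma Uall (X : I -> Prop) : (forall i, X i) -> U X.
Proof. move=> H; apply: US UT => i _; exact: H. Qed.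

Lemma U_list (T : Type) (s : list T) (P : T -> I -> Prop) :
  (forall j, List.In j s -> U (P j)) -> U (fun i => forall j, List.In j s -> P j i).
Proof.
elim: s => [|a s IH] H; first by apply: Uall.
have := UI (H a (or_introl erefl)) (IH (fun j Hj => H j (or_intror Hj))).
apply: US => i [H1 H2] j /= [<-|/H2] //.
Qed.

Lemma U_ord n (P : 'I_n -> I -> Prop) :
  (forall j, U (P j)) -> U (fun i => forall j, P j i).
Proof.
move=> H; have := U_list (s := enum 'I_n) (P := P) (fun j _ => H j).
apply: US => i Hi j; apply: Hi; exact: In_enum.
Qed.

Definition eqU (x y : I -> A) := U (fun i => x i = y i).

Lemma eqU_refl x : eqU x x.
Proof. exact: Uall. Qed.
Lemma eqU_sym x y : eqU x y -> eqU y x.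
Proof. apply: US => i; by []. Qed.
Lemma eqU_trans x y z : eqU x y -> eqU y z -> eqU x z.
Proof. move=> H1 H2; apply: US (UI H1 H2) => i [-> ->]; by []. Qed.

Definition canon (x : I -> A) : I -> A := epsilon (inhabits x) (fun y => eqU y x).

Lemma canon_eq x : eqU (canon x) x.
Proof. apply: (epsilon_spec (inhabits x) (fun y => eqU y x)); exists x; exact: eqU_refl. Qed.

Lemma canon_resp x y : eqU x y -> canon x = canon y.
Proof.
move=> H; rewrite /canon.
have -> : (fun z => eqU z x) = (fun z => eqU z y).
  apply: functional_extensionality => z; apply: propositional_extensionality.
  split => Hz; [exact: eqU_trans Hz H | exact: eqU_trans Hz (eqU_sym H)].
by rewrite (proof_irrelevance _ (inhabits x) (inhabits y)).
Qed.

Lemma canon_idem x : canon (canon x) = canon x.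
Proof. apply: canon_resp; exact: canon_eq. Qed.

Definition C := {x : I -> A | canon x = x}.
Definition mk (x : I -> A) : C := exist _ (canon x) (canon_idem x).

Lemma C_eq (c1 c2 : C) : eqU (proj1_sig c1) (proj1_sig c2) -> c1 = c2.
Proof.
case: c1 c2 => [x1 p1] [x2 p2] /= H.
have E : x1 = x2 by rewrite -p1 -p2; apply: canon_resp.
subst x2; f_equal; apply: proof_irrelevance.
Qed.

Lemma mk_eq x : eqU (proj1_sig (mk x)) x.
Proof. exact: canon_eq. Qed.

Definition UP : structure L :=
  @Structure L C (fun f cs => mk (fun i => finterp (fun j => proj1_sig (cs j) i)))
    (fun r cs => U (fun i => rinterp (fun j => proj1_sig (cs j) i))).

Definition gi (g : nat -> UP) (i : I) : nat -> A := fun n => proj1_sig (g n) i.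

Lemma eval_UP (g : nat -> UP) t :
  eqU (proj1_sig (eval UP g t)) (fun i => eval A (gi g i) t).
Proof.
elim: t => [n|f ts IH] /=; first exact: eqU_refl.
apply: eqU_trans (mk_eq _) _.
apply: US (U_ord IH) => i H /=; f_equal; apply: functional_extensionality => j; exact: H.
Qed.

Lemma gi_upd (g : nat -> UP) x (a : UP) i :
  gi (upd g x a) i = upd (gi g i) x (proj1_sig a i).
Proof.
apply: functional_extensionality => n; rewrite /gi /upd; by case: eqP.
Qed.

Lemma los phi (g : nat -> UP) : sat UP g phi <-> U (fun i => sat A (gi g i) phi).
Proof.
elim: phi g => [||t u|r ts|p IH|p IHp q IHq|p IHp q IHq|p IHp q IHq|x p IH|x p IH] g /=.
- split => // _; exact: UT.
- split => // H; exact: (U0 H).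
- have Ht := eval_UP g t; have Hu := eval_UP g u.
  split.
  + move=> E; rewrite E in Ht.
    apply: US (UI Ht Hu) => i [<- <-]; by [].
  + move=> H; apply: C_eq; apply: US (UI (UI Ht Hu) H) => i [[-> ->] ->]; by [].
- have H := U_ord (fun j => eval_UP g (ts j)).
  split.
  + move=> H1; apply: US (UI H1 H) => i [H2 H3].
    have <- // : (fun j => proj1_sig (eval UP g (ts j)) i) = (fun j => eval A (gi g i) (ts j)).
    by apply: functional_extensionality => j; apply: H3.
  + move=> H1; apply: US (UI H1 H) => i [H2 H3].
    have -> // : (fun j => proj1_sig (eval UP g (ts j)) i) = (fun j => eval A (gi g i) (ts j)).
    by apply: functional_extensionality => j; apply: H3.
- split.
  + move=> H; case: (UC (fun i => sat A (gi g i) p)) => // Hp.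
    by exfalso; apply: H; apply/IH.
  + move=> H /IH Hp; apply: U0; apply: US (UI H Hp) => i []; by [].
- split.
  + move=> [/IHp H1 /IHq H2]; exact: UI H1 H2.
  + move=> H; split; [apply/IHp|apply/IHq]; apply: US H => i []; by [].
- split.
  + move=> [/IHp H|/IHq H]; apply: US H => i; tauto.
  + move=> H; case: (UC (fun i => sat A (gi g i) p)) => Hp; first by left; apply/IHp.
    right; apply/IHq; apply: US (UI H Hp) => i; tauto.
- split.
  + move=> H; case: (UC (fun i => sat A (gi g i) p)) => Hp.
    * have := H (proj2 (IHp g) Hp) => /IHq Hq; apply: US Hq => i; tauto.
    * apply: US Hp => i; tauto.
  + move=> H /IHp Hp; apply/IHq; apply: US (UI H Hp) => i []; tauto.
- split.
  + move=> H; apply: NNPP => HN.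
    case: (UC (fun i => forall a : A, sat A (upd (gi g i) x a) p)) => // H2.
    pose b := fun i => epsilon (inhabits a0) (fun a => ~ sat A (upd (gi g i) x a) p).
    have Hb := proj1 (IH _) (H (mk b)).
    have := UI (UI Hb H2) (mk_eq b).
    move=> HH; apply: U0; apply: US HH => i [[H3 H4] H5].
    rewrite gi_upd H5 in H3.
    have : ~ sat A (upd (gi g i) x (b i)) p.
      apply: (epsilon_spec (inhabits a0) (fun a => ~ sat A (upd (gi g i) x a) p)).
      exact: not_all_ex_not H4.
    by [].
  + move=> H a; apply/IH; apply: US H => i Hi; rewrite gi_upd; exact: Hi.
- split.
  + move=> [a /IH H]; apply: US H => i; rewrite gi_upd => Hi; by exists (proj1_sig a i).
  + move=> H.
    pose b := fun i => epsilon (inhabits a0) (fun a => sat A (upd (gi g i) x a) p).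
    exists (mk b); apply/IH.
    apply: US (UI H (mk_eq b)) => i [Hi E]; rewrite gi_upd E.
    exact: (epsilon_spec (inhabits a0) (fun a => sat A (upd (gi g i) x a) p)).
Qed.

Lemma UP_model (T : theory L) : is_model T A -> is_model T UP.
Proof.
move=> [_ HA]; split; first exact: inhabits (mk (fun _ => a0)).
move=> phi Hphi g; apply/los; apply: Uall => i; exact: HA.
Qed.

End Ultra.

Lemma In_mem (T : eqType) (x : T) (s : seq T) : List.In x s <-> x \in s.
Proof.
elim: s => //= a s IH; rewrite in_cons IH; split.
- by move=> [->|->]; rewrite ?eqxx ?orbT.
- by move=> /orP [/eqP ->|]; auto.
Qed.

Lemma In_iota n v : List.In v (iota 0 n) <-> v < n.
Proof. by rewrite In_mem mem_iota. Qed.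

Lemma In_nth (T : Type) (d : T) (S : seq T) b :
  List.In b S -> exists j, j < size S /\ nth d S j = b.
Proof.
elim: S => //= a S IH [->|/IH [j [H1 H2]]]; first by exists 0.
by exists j.+1.
Qed.

Section Witness.
Variables (L : signature) (A B : structure L) (h : A -> B).
Hypothesis himm : immersion h.
Variables (ys : seq nat) (Phi : seq (form L)) (psi : form L).
Hypothesis HPa : forall phi, List.In phi Phi -> atomic phi.
Hypothesis Hpsi : atomic psi.
Variable e : nat -> A.
Hypothesis HA : sat A e (geom_form ys Phi psi).
Variable g' : nat -> B.
Hypothesis Hag : agree_out ys (h \o e) g'.
Hypothesis HPB : sat B g' (big_and Phi).

Definition N := maxn (lmax Phi) (amax psi).

Definition Fact := ({f : Defs.fsym L & 'I_(farity f) -> B} +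
  {r : rsym L & {bs : 'I_(rarity r) -> B | @rinterp L B r bs}})%type.

Definition elems (x : Fact) : seq B :=
  match x with
  | inl (existT f bs) => @finterp L B f bs :: List.map bs (enum 'I_(farity f))
  | inr (existT r (exist bs _)) => List.map bs (enum 'I_(rarity r))
  end.

Definition fun_ok (w : B -> A) (i : seq Fact) :=
  forall f bs, List.In (inl (existT _ f bs)) i -> w (@finterp L B f bs) = @finterp L A f (w \o bs).
Definition rel_ok (w : B -> A) (i : seq Fact) :=
  forall r bs pf, List.In (inr (existT _ r (exist _ bs pf))) i -> @rinterp L A r (w \o bs).

Lemma witness (i : seq Fact) : exists w : B -> A,
  fun_ok w i /\ rel_ok w i /\ sat A (w \o g') psi.
Proof.
pose S := List.app (List.map g' (iota 0 N.+1)) (List.flat_map elems i).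
pose d := g' 0.
pose pos := fun b => epsilon (inhabits 0) (fun j => j < size S /\ nth d S j = b).
have Hpos : forall b, List.In b S -> pos b < size S /\ nth d S (pos b) = b.
  move=> b Hb; apply: (epsilon_spec (inhabits 0) (fun j => j < size S /\ nth d S j = b)).
  exact: In_nth.
pose var := fun b => N.+1 + pos b.
pose GB := fun n => if (N < n) && (n - N.+1 < size S) then nth d S (n - N.+1) else g' n.
have HGBvar : forall b, List.In b S -> GB (var b) = b.
  move=> b Hb; have [H1 H2] := Hpos b Hb; rewrite /GB /var.
  have -> : N.+1 + pos b - N.+1 = pos b by lia.
  by rewrite H1 andbT ltn_addr // ltnSn.
have HGBlow : forall n, n <= N -> GB n = g' n.
  by move=> n Hn; rewrite /GB; have -> : (N < n) = false by lia.
have InS_g : forall v, v <= N -> List.In (g' v) S.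
  move=> v Hv; apply/List.in_app_iff; left; apply: List.in_map; apply/In_iota; lia.
have InS_e : forall x b, List.In x i -> List.In b (elems x) -> List.In b S.
  move=> x b Hx Hb; apply/List.in_app_iff; right; apply/List.in_flat_map; by exists x.
pose xs := List.app ys (List.map (fun j => N.+1 + j) (iota 0 (size S))).
have Hxs_low : forall n, n <= N -> List.In n xs -> List.In n ys.
  move=> n Hn /List.in_app_iff [//|/List.in_map_iff [j [Hj _]]]; lia.
pose links := List.map (fun v => FEq (TVar L (var (g' v))) (TVar L v)) (iota 0 N.+1).
pose fatom := fun x : Fact => match x with
  | inl (existT f bs) => [:: FEq (TVar L (var (@finterp L B f bs))) (@TApp L f (fun j => TVar L (var (bs j))))]
  | inr (existT r (exist bs _)) => [:: @FRel L r (fun j => TVar L (var (bs j)))]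
  end.
pose atoms := List.app Phi (List.app links (List.flat_map fatom i)).
pose phiB := foldr (@FEx L) (big_and atoms) xs.
have Hpe : pos_exist phiB.
  apply: pe_exN; apply: qfp_big_and => q /List.in_app_iff [/HPa //|/List.in_app_iff [|]].
  - by move=> /List.in_map_iff [v [<- _]].
  - move=> /List.in_flat_map [[[f bs]|[r [bs pf]]] [_ /= [<-|//]]]; by [].
have HBphi : sat B (h \o e) phiB.
  apply/sat_exN; exists GB; split.
  - move=> n Hn; rewrite /GB.
    case: ifP => [/andP [H1 H2]|_].
    + exfalso; apply: Hn; apply/List.in_app_iff; right; apply/List.in_map_iff.
      exists (n - N.+1); split; [lia|apply/In_iota; exact: H2].
    + apply: Hag => Hy; apply: Hn; apply/List.in_app_iff; by left.
  - apply/sat_big_and => q /List.in_app_iff [Hq|/List.in_app_iff [Hq|Hq]].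
    + apply/(sat_ext_atomic (g1 := GB) (g2 := g') (HPa Hq)).
        move=> n Hn; apply: HGBlow; rewrite /N.
        have := amax_lmax Hq; lia.
      move: HPB => /sat_big_and; apply; exact: Hq.
    + move: Hq => /List.in_map_iff [v [<- /In_iota Hv]] /=.
      rewrite HGBvar; last by apply: InS_g; lia.
      rewrite HGBlow //; lia.
    + move: Hq => /List.in_flat_map [[[f bs]|[r [bs pf]]] [Hx /= [<-|//]]] /=.
      * rewrite HGBvar; last by apply: (InS_e _ _ Hx); left.
        f_equal; apply: functional_extensionality => j; rewrite HGBvar //.
        apply: (InS_e _ _ Hx); right; apply: List.in_map; exact: In_enum.
      * have -> : (fun j => GB (var (bs j))) = bs => //.
        apply: functional_extensionality => j; apply: HGBvar.
        apply: (InS_e _ _ Hx); apply: List.in_map; exact: In_enum.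
have [_ Hrefl] := himm.
have [GA [HagA HsA]] := proj1 (sat_exN _ _ _) (Hrefl _ Hpe e HBphi).
move: HsA => /sat_big_and HsA.
exists (fun b => GA (var b)); split; [|split].
- move=> f bs Hx.
  have := HsA (FEq (TVar L (var (@finterp L B f bs))) (@TApp L f (fun j => TVar L (var (bs j))))).
  apply; apply/List.in_app_iff; right; apply/List.in_app_iff; right.
  apply/List.in_flat_map; exists (inl (existT _ f bs)); split => //; by left.
- move=> r bs pf Hx.
  have := HsA (@FRel L r (fun j => TVar L (var (bs j)))).
  apply; apply/List.in_app_iff; right; apply/List.in_app_iff; right.
  apply/List.in_flat_map; exists (inr (existT _ r (exist _ bs pf))); split => //; by left.
- pose g2 := fun n => if n <= N then GA n else e n.
  have Hg2 : sat A g2 psi.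
    move: HA => /sat_allN /(_ g2) /=; apply.
    + move=> n Hn; rewrite /g2; case: ifP => // Hle.
      apply: HagA => Hx; apply: Hn; exact: (Hxs_low _ Hle Hx).
    + apply/sat_big_and => q Hq.
      apply/(sat_ext_atomic (g1 := g2) (g2 := GA) (HPa Hq)).
        move=> n Hn; rewrite /g2; have -> // : n <= N.
        have := amax_lmax Hq; rewrite /N; lia.
      apply: HsA; apply/List.in_app_iff; by left.
  apply/(sat_ext_atomic (g1 := (fun b => GA (var b)) \o g') (g2 := g2) Hpsi) => // n Hn.
  have HnN : n <= N by rewrite /N; lia.
  rewrite /g2 HnN /=.
  have := HsA (FEq (TVar L (var (g' n))) (TVar L n)); apply.
  apply/List.in_app_iff; right; apply/List.in_app_iff; left.
  apply: List.in_map; apply/In_iota; lia.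
Qed.

End Witness.

Lemma triv_embed (L : signature) (B : structure L) (p : B) :
  (forall f, finterp (fun _ : 'I_(farity f) => p) = p) ->
  (forall r, rinterp (fun _ : 'I_(rarity r) => p)) ->
  embedding (fun _ : trivial_structure L => p).
Proof.
move=> Hf Hr.
have Ht : forall t : term L, eval B (fun _ => p) t = p.
  elim=> [n|f ts IH] //=.
  rewrite -[in RHS](Hf f); f_equal; exact: functional_extensionality.
split; first by move=> [] [].
case=> //= [t u|r ts] _ e.
- rewrite !Ht; split => // _; by case: (eval (trivial_structure L) e t); case: (eval (trivial_structure L) e u).
- have -> : (fun i => eval B ((fun _ : trivial_structure L => p) \o e) (ts i)) = (fun _ => p).
    by apply: functional_extensionality => i; apply: Ht.
  by split.
Qed.

Lemma backward (L : signature) (T : theory L) :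
  strict T -> geom_complete T -> pos_model_complete T.
Proof.
move=> Hs Hg A B mA mB h hh; split => // phi Hphi e HB.
apply: NNPP => HA.
have [xs [p [Hp Ephi]]] := pos_exist_dec Hphi; subst phi.
have [g' [Hag Hsp]] := proj1 (sat_exN _ _ _) HB.
have [Phi [HPa [HPs HPi]]] := dnf Hp Hsp.
have key : forall psi, atomic psi -> sat B g' psi.
  move=> psi Hpsi.
  have HAg : sat A e (geom_form xs Phi psi).
    apply/sat_allN => g'' Hag'' HPhi; exfalso; apply: HA.
    apply/sat_exN; exists g''; split => //; exact: HPi.
  have [_ Hgc] := Hg A B mA mB h hh.
  have := Hgc xs Phi psi (fun q Hq => HPa q (proj1 (in_list_In _ _) Hq)) Hpsi e HAg.
  move=> /sat_allN H; exact: (H g' Hag HPs).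
apply: (Hs B mB (fun _ => g' 0)); apply: triv_embed.
- move=> f; exact: (key (FEq (@TApp L f (fun _ => TVar L 0)) (TVar L 0)) I).
- move=> r; exact: (key (@FRel L r (fun _ => TVar L 0)) I).
Qed.

Lemma ultra_exists (I J : Type) (D : J -> I -> Prop) (j0 : J)
  (Dne : forall j, exists i, D j i)
  (Ddir : forall j1 j2, exists j, forall i, D j i -> D j1 i /\ D j2 i) :
  exists U : (I -> Prop) -> Prop,
    (forall X Y : I -> Prop, (forall i, X i -> Y i) -> U X -> U Y) /\
    (forall X Y : I -> Prop, U X -> U Y -> U (fun i => X i /\ Y i)) /\
    ~ U (fun _ => False) /\
    (forall X : I -> Prop, U X \/ U (fun i => ~ X i)) /\
    (forall j, U (D j)).
Proof.
have FF : filter.Filter (filter.filter_from (classical_sets.setT) D).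
  apply: filter.filter_from_filter; first by exists j0.
  move=> i j _ _; have [k Hk] := Ddir i j; exists k => // x /Hk.
have PF : filter.ProperFilter (filter.filter_from (classical_sets.setT) D).
  apply: filter.filter_from_proper => j _; have [i Hi] := Dne j; by exists i.
have [G [UG sFG]] := filter.ultraFilterLemma PF.
exists G; split; [|split; [|split; [|split]]].
- move=> X Y XY GX; exact: (filter.filterS XY GX).
- move=> X Y GX GY; exact: (filter.filterI GX GY).
- exact: (filter.filter_not_empty G).
- move=> X; exact: (filter.in_ultra_setVsetC X UG).
- move=> j; apply: sFG; exists j => //.
Qed.

Section Fwd.
Variables (L : signature) (B : structure L) (A : structure L) (W : seq (Fact B) -> B -> A).
Hypothesis HWf : forall i, fun_ok (W i) i.

Fixpoint tfacts (s : nat -> B) (t : term L) : seq (Fact B) :=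
  match t with
  | TVar _ => [::]
  | TApp f ts => inl (existT _ f (fun j => eval B s (ts j))) ::
      List.flat_map (fun j => tfacts s (ts j)) (enum 'I_(farity f))
  end.

Lemma tfacts_ok (i : seq (Fact B)) s t :
  (forall x, List.In x (tfacts s t) -> List.In x i) ->
  eval A (W i \o s) t = W i (eval B s t).
Proof.
elim: t => [n|f ts IH] //= H.
rewrite (HWf (H _ (or_introl erefl))); f_equal.
apply: functional_extensionality => j /=; apply: IH => x Hx.
apply: H; right; apply/List.in_flat_map; exists j; split => //; exact: In_enum.
Qed.

Lemma atom_facts (HWr : forall i, rel_ok (W i) i) phi s : atomic phi -> sat B s phi ->
  exists l, forall i, (forall x, List.In x l -> List.In x i) -> sat A (W i \o s) phi.
Proof.
case: phi => //= [t u|r ts] _ H.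
- exists (List.app (tfacts s t) (tfacts s u)) => i Hi.
  rewrite !tfacts_ok ?H // => x Hx; apply: Hi; apply/List.in_app_iff; tauto.
- exists (inr (existT _ r (exist _ (fun j => eval B s (ts j)) H)) ::
     List.flat_map (fun j => tfacts s (ts j)) (enum 'I_(rarity r))) => i Hi.
  have -> : (fun j => eval A (W i \o s) (ts j)) = W i \o (fun j => eval B s (ts j)).
    apply: functional_extensionality => j /=; apply: tfacts_ok => x Hx.
    apply: Hi; right; apply/List.in_flat_map; exists j; split => //; exact: In_enum.
  exact: (@HWr i _ _ _ (Hi _ (or_introl erefl))).
Qed.

End Fwd.

Lemma forward (L : signature) (T : theory L) :
  pos_model_complete T -> geom_complete T.
Proof.
move=> Hpmc A B mA mB h hh; split => // ys Phi psi HPa' Hpsi e HA.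
have HPa : forall phi, List.In phi Phi -> atomic phi.
  by move=> phi /in_list_In; apply: HPa'.
apply/sat_allN => g' Hag HPB.
have himm := Hpmc A B mA mB h hh.
have Wex := witness himm HPa Hpsi HA Hag HPB.
pose W := fun i => proj1_sig (constructive_indefinite_description _ (Wex i)).
have HW : forall i, fun_ok (W i) i /\ rel_ok (W i) i /\ sat A (W i \o g') psi.
  move=> i; exact: (proj2_sig (constructive_indefinite_description _ (Wex i))).
pose D := fun l i : seq (Fact B) => forall x, List.In x l -> List.In x i.
have Dne : forall l, exists i, D l i by move=> l; exists l.
have Ddir : forall l1 l2, exists l, forall i, D l i -> D l1 i /\ D l2 i.
  move=> l1 l2; exists (List.app l1 l2) => i Hi; split => x Hx; apply: Hi;
  apply: List.in_or_app; tauto.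
have [U [US [UI [U0 [UC UD]]]]] := ultra_exists [::] Dne Ddir.
have UT : U (fun _ => True) by apply: US (UD [::]).
have [[a0] _] := mA.
pose C := UP A US UI UT.
have mC : is_model T C := UP_model a0 US UI U0 UC UT mA.
pose k := fun b : B => (mk US UI UT (fun i => W i b) : C).
have agreeU : forall (s : nat -> B) (n0 : nat),
    U (fun i => forall n, List.In n (iota 0 n0) -> gi (k \o s) i n = W i (s n)).
  move=> s n0; apply: U_list => // n _; exact: (mk_eq US UI UT (fun i => W i (s n))).
have hk : homomorphism k.
  move=> phi Hphi s Hs; apply/(los a0 U0 UC).
  have [l Hl] := atom_facts (fun i => proj1 (HW i)) (fun i => proj1 (proj2 (HW i))) Hphi Hs.
  have HU := UI _ _ (UD l) (agreeU s (amax phi).+1).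
  apply: (US _ _ _ HU) => i [Hi Hag'].
  apply/(sat_ext_atomic (g1 := gi (k \o s) i) (g2 := W i \o s) Hphi); last exact: Hl.
  move=> n Hn; apply: Hag'; apply/In_iota; by rewrite ltnS.
have [_ Hrefl] := Hpmc B C mB mC k hk.
apply: (Hrefl psi (pe_qf (qfp_atom Hpsi)) g').
apply/(los a0 U0 UC).
apply: (US _ _ _ (agreeU g' (amax psi).+1)) => i Hag'.
apply/(sat_ext_atomic (g1 := gi (k \o g') i) (g2 := W i \o g') Hpsi); last exact: (proj2 (proj2 (HW i))).
move=> n Hn; apply: Hag'; apply/In_iota; by rewrite ltnS.
Qed.

Theorem theorem4p11 (L : signature) (T : theory L) :
  strict T -> (pos_model_complete T <-> geom_complete T).
Proof.
move=> Hs; split; [exact: forward | exact: backward].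
Qed.
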